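(* Let $\mathrm{E}$ be a law of the form $\mathrm{x}\simeq\mathrm{x}\diamond f(\mathrm{x},\mathrm{y},\mathrm{z})$, for some word $f$ in the variables $\mathrm{x},\mathrm{y},\mathrm{z}$, which implies the law $\mathrm{x}\diamond\mathrm{y}\simeq(\mathrm{x}\diamond\mathrm{y})\diamond\mathrm{y}$. Let $w\in M_X$ be irreducible and $w'\in M_X$ with $w\sim_{\mathrm{E}}w'$. (i) If $w=w_1\diamond w_2$, then $w'=(\cdots((w_1'\diamond w_2')\diamond v_1)\diamond\cdots)\diamond v_n$ for some $n\ge0$, words $w_1'\sim_{\mathrm{E}}w_1$, $w_2'\sim_{\mathrm{E}}w_2$, and words $v_1,\dots,v_n$ such that for each $0\le i<n$ there are words $x_i,y_i,z_i$ with $v_{i+1}\sim_{\mathrm{E}}f(x_i,y_i,z_i)$ and $x_i\sim_{\mathrm{E}}(\cdots((w_1'\diamond w_2')\diamond v_1)\diamond\cdots)\diamond v_i$ (in particular $v_{i+1}\to_{\mathrm{E}}x_i$). (ii) If $w\in X$ is a letter, then $w'=(\cdots(w\diamond v_1)\diamond\cdots)\diamond v_n$ for some $n\ge0$ and words $v_1,\dots,v_n$ such that for each $0\le i<n$ there are words $x_i,y_i,z_i$ with $v_{i+1}\sim_{\mathrm{E}}f(x_i,y_i,z_i)$ and $x_i\sim_{\mathrm{E}}(\cdots(w\diamond v_1)\diamond\cdots)\diamond v_i$. Conversely, every word of the form described in (i) (respectively (ii)) is $\sim_{\mathrm{E}}$-equivalent to $w$.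
   Context: $M_X$ is the set of words of the free magma on an alphabet $X$. For words $u,u'$, $u\sim_{\mathrm{E}}u'$ means the law $u\simeq u'$ is a consequence of $\mathrm{E}$ (holds in every magma satisfying $\mathrm{E}$). $f(x,y,z)$ denotes the word obtained from $f$ by substituting words $x,y,z$ for $\mathrm{x},\mathrm{y},\mathrm{z}$. Define the relation $u'\to_{\mathrm{E}}u$ (on words) to mean $u\sim_{\mathrm{E}}u''\diamond u'$ for some word $u''$; given that $\mathrm{E}$ implies $\mathrm{x}\diamond\mathrm{y}\simeq(\mathrm{x}\diamond\mathrm{y})\diamond\mathrm{y}$, this is equivalent to $u\sim_{\mathrm{E}}u\diamond u'$. A word $w$ is irreducible if it is not of the form $w_1\diamond w_2$ with $w_2\to_{\mathrm{E}}w_1$. *)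

(* Defs.v *)
From Stdlib Require Import List Arith.
Import ListNotations.
Set Implicit Arguments.

Inductive word (X : Type) : Type :=
| Var : X -> word X
| Op : word X -> word X -> word X.
Arguments Var {X} _.
Arguments Op {X} _ _.

Inductive var3 : Type := vx | vy | vz.

Definition val3 {A : Type} (a b c : A) (v : var3) : A :=
  match v with vx => a | vy => b | vz => c end.

Fixpoint eval {X M : Type} (op : M -> M -> M) (s : X -> M) (u : word X) : M :=
  match u with
  | Var a => s a
  | Op u1 u2 => op (eval op s u1) (eval op s u2)
  end.

Fixpoint subst {X Y : Type} (s : X -> word Y) (u : word X) : word Y :=
  match u with
  | Var a => s a
  | Op u1 u2 => Op (subst s u1) (subst s u2)
  end.

Definition f_at {X : Type} (f : word var3) (x y z : word X) : word X :=
  subst (val3 x y z) f.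

Definition satisfiesE (f : word var3) (M : Type) (op : M -> M -> M) : Prop :=
  forall a b c : M, a = op a (eval op (val3 a b c) f).

Definition equivE (f : word var3) {X : Type} (u u' : word X) : Prop :=
  forall (M : Type) (op : M -> M -> M), satisfiesE f op ->
  forall s : X -> M, eval op s u = eval op s u'.

Definition implies_xy (f : word var3) : Prop :=
  forall (M : Type) (op : M -> M -> M), satisfiesE f op ->
  forall a b : M, op a b = op (op a b) b.

Definition arrowE (f : word var3) {X : Type} (u' u : word X) : Prop :=
  exists u'' : word X, equivE f u (Op u'' u').

Definition irreducible (f : word var3) {X : Type} (w : word X) : Prop :=
  ~ (exists w1 w2 : word X, w = Op w1 w2 /\ arrowE f w2 w1).

Definition chain {X : Type} (w0 : word X) (vs : list (word X)) : word X :=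
  fold_left Op vs w0.

Definition good_chain (f : word var3) {X : Type} (w0 : word X)
    (vs : list (word X)) : Prop :=
  forall i, i < length vs ->
    exists xi yi zi : word X,
      equivE f (nth i vs w0) (f_at f xi yi zi) /\
      equivE f xi (chain w0 (firstn i vs)).

(* Main.v *)
Require Import Defs.
From Stdlib Require Import List Arith Lia Relations ClassicalEpsilon FunctionalExtensionality PropExtensionality ProofIrrelevance.
Import ListNotations.

Lemma eval_subst {X Y M : Type} (op : M->M->M) (s : Y -> M) (sg : X -> word Y) u :
  eval op s (subst sg u) = eval op (fun x => eval op s (sg x)) u.
Proof. induction u; simpl; congruence. Qed.

Lemma eval_ext {X M : Type} (op : M->M->M) (s s' : X -> M) u :
  (forall x, s x = s' x) -> eval op s u = eval op s' u.
Proof. intros H; induction u; simpl; congruence. Qed.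

Lemma eval_f_at {X M : Type} (op : M->M->M) (s: X->M) f x y z :
  eval op s (f_at f x y z) = eval op (val3 (eval op s x) (eval op s y) (eval op s z)) f.
Proof. unfold f_at. rewrite eval_subst. apply eval_ext. intros []; reflexivity. Qed.

Lemma eqv_refl f {X} (u : word X) : equivE f u u.
Proof. intros M op _ s; reflexivity. Qed.
Lemma eqv_sym f {X} (u v : word X) : equivE f u v -> equivE f v u.
Proof. intros H M op HE s; symmetry; apply H; auto. Qed.
Lemma eqv_trans f {X} (u v w : word X) : equivE f u v -> equivE f v w -> equivE f u w.
Proof. intros H1 H2 M op HE s; rewrite (H1 M op HE s); apply H2; auto. Qed.
Lemma eqv_op f {X} (u u' v v' : word X) :
  equivE f u u' -> equivE f v v' -> equivE f (Op u v) (Op u' v').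
Proof. intros H1 H2 M op HE s; simpl; rewrite (H1 M op HE s), (H2 M op HE s); reflexivity. Qed.
Lemma eqv_fat f {X} (x x' y z : word X) :
  equivE f x x' -> equivE f (f_at f x y z) (f_at f x' y z).
Proof. intros H M op HE s. rewrite !eval_f_at, (H M op HE s). reflexivity. Qed.
Lemma eqv_E f {X} (t y z : word X) : equivE f t (Op t (f_at f t y z)).
Proof. intros M op HE s. simpl. rewrite eval_f_at. apply HE. Qed.

Inductive step (f : word var3) {X : Type} : word X -> word X -> Prop :=
| st_exp : forall s y z, step f s (Op s (f_at f s y z))
| st_con : forall s y z, step f (Op s (f_at f s y z)) s
| st_l : forall u u' v, step f u u' -> step f (Op u v) (Op u' v)
| st_r : forall u v v', step f v v' -> step f (Op u v) (Op u v').

Lemma step_sound f {X} (u v : word X) : step f u v -> equivE f u v.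
Proof.
  induction 1.
  - apply eqv_E.
  - apply eqv_sym, eqv_E.
  - apply eqv_op; auto using eqv_refl.
  - apply eqv_op; auto using eqv_refl.
Qed.

Lemma step_sym f {X} (u v : word X) : step f u v -> step f v u.
Proof. induction 1; constructor; auto. Qed.

Definition D f {X} : relation (word X) := clos_refl_sym_trans (word X) (step f).

Lemma D_l f {X} (u u' v : word X) : D f u u' -> D f (Op u v) (Op u' v).
Proof.
  induction 1.
  - apply rst_step; constructor; auto.
  - apply rst_refl.
  - apply rst_sym; auto.
  - eapply rst_trans; eauto.
Qed.
Lemma D_r f {X} (u v v' : word X) : D f v v' -> D f (Op u v) (Op u v').
Proof.
  induction 1.
  - apply rst_step; constructor; auto.
  - apply rst_refl.
  - apply rst_sym; auto.
  - eapply rst_trans; eauto.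
Qed.

Definition QM f X := { P : word X -> Prop | exists u, P = D f u }.
Definition cls f {X} (u : word X) : QM f X := exist _ (D f u) (ex_intro _ u eq_refl).
Definition rep f {X} (P : QM f X) : word X :=
  proj1_sig (constructive_indefinite_description _ (proj2_sig P)).
Lemma rep_spec f X (P : QM f X) : proj1_sig P = D f (rep f P).
Proof. unfold rep. destruct (constructive_indefinite_description _ _) as [u Hu]; simpl; exact Hu. Qed.
Lemma qm_eq f X (P Q : QM f X) : proj1_sig P = proj1_sig Q -> P = Q.
Proof. destruct P as [p hp], Q as [q hq]; simpl; intros ->; f_equal; apply proof_irrelevance. Qed.
Lemma cls_rep f X (P : QM f X) : cls f (rep f P) = P.
Proof. apply qm_eq; simpl; symmetry; apply rep_spec. Qed.
Lemma cls_eq f X (u u' : word X) : D f u u' -> cls f u = cls f u'.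
Proof.
  intros H; apply qm_eq; simpl; apply functional_extensionality; intro t;
  apply propositional_extensionality; split; intro H'.
  - eapply rst_trans; [apply rst_sym; exact H| exact H'].
  - eapply rst_trans; [exact H| exact H'].
Qed.
Lemma cls_inj f X (u u' : word X) : cls f u = cls f u' -> D f u u'.
Proof. intros H. apply (f_equal (@proj1_sig _ _)) in H; simpl in H. rewrite H. apply rst_refl. Qed.

Definition qop f X (P Q : QM f X) : QM f X := cls f (Op (rep f P) (rep f Q)).

Lemma qop_cls f X (A B : word X) : qop f X (cls f A) (cls f B) = cls f (Op A B).
Proof.
  unfold qop. apply cls_eq. eapply rst_trans.
  - apply D_l. apply cls_inj. apply cls_rep.
  - apply D_r. apply cls_inj. apply cls_rep.
Qed.

Lemma eval_q f X {Y} (s : Y -> QM f X) (sg : Y -> word X) u :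
  (forall x, s x = cls f (sg x)) -> eval (qop f X) s u = cls f (subst sg u).
Proof.
  intros H; induction u; simpl.
  - apply H.
  - rewrite IHu1, IHu2. apply qop_cls.
Qed.

Lemma q_sat f X : satisfiesE f (qop f X).
Proof.
  intros a b c.
  rewrite (eval_q f X (val3 a b c) (val3 (rep f a) (rep f b) (rep f c))).
  2:{ intros []; simpl; symmetry; apply cls_rep. }
  rewrite <- (cls_rep f X a) at 1 2.
  rewrite qop_cls. apply cls_eq. apply rst_sym, rst_step.
  apply (st_con f (rep f a) (rep f b) (rep f c)).
Qed.

Lemma subst_Var {X} (u : word X) : subst Var u = u.
Proof. induction u; simpl; congruence. Qed.

Lemma complete f {X} (u v : word X) : equivE f u v -> D f u v.
Proof.
  intros H. specialize (H (QM f X) (qop f X) (q_sat f X) (fun x => cls f (Var x))).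
  rewrite !(eval_q f X (fun x => cls f (Var x)) Var) in H by reflexivity.
  rewrite !subst_Var in H. apply cls_inj; exact H.
Qed.

Inductive CF f {X} (B : word X -> Prop) : word X -> Prop :=
| cf_base : forall b, B b -> CF f B b
| cf_ext : forall t v x y z, CF f B t -> equivE f v (f_at f x y z) -> equivE f x t ->
    CF f B (Op t v).

Lemma CF_step f X (B : word X -> Prop)
  (HB : forall b t', B b -> step f b t' -> B t' \/ exists y z, t' = Op b (f_at f b y z)) :
  forall t, CF f B t -> forall t', step f t t' -> CF f B t'.
Proof.
  induction 1 as [b Hb | t v x y z Ht IH Hv Hx]; intros t' Hs.
  - destruct (HB _ _ Hb Hs) as [H|[y [z ->]]].
    + apply cf_base; auto.
    + eapply cf_ext; [apply cf_base; auto| apply eqv_refl | apply eqv_refl].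
  - inversion Hs; subst.
    + eapply cf_ext; [eapply cf_ext; eauto | apply eqv_refl | apply eqv_refl].
    + exact Ht.
    + eapply cf_ext; [apply IH; eauto | exact Hv | ].
      eapply eqv_trans; [exact Hx| apply step_sound; auto].
    + eapply cf_ext; [exact Ht | | exact Hx].
      eapply eqv_trans; [apply eqv_sym, step_sound; eauto| exact Hv].
Qed.

Lemma CF_D f X (B : word X -> Prop)
  (HB : forall b t', B b -> step f b t' -> B t' \/ exists y z, t' = Op b (f_at f b y z)) :
  forall u v, D f u v -> (CF f B u <-> CF f B v).
Proof.
  induction 1.
  - split; intro; eapply CF_step; eauto using step_sym.
  - tauto.
  - tauto.
  - tauto.
Qed.

Lemma CF_equiv f X (B : word X -> Prop) (w : word X)
  (HB : forall b, B b -> equivE f w b) : forall t, CF f B t -> equivE f w t.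
Proof.
  induction 1 as [b Hb | t v x y z Ht IH Hv Hx]; auto.
  eapply eqv_trans; [exact IH|].
  eapply eqv_trans; [apply (eqv_E f t y z)|].
  apply eqv_op; [apply eqv_refl|].
  apply eqv_sym. eapply eqv_trans; [exact Hv|]. apply eqv_fat; exact Hx.
Qed.

Lemma good_app f X (b: word X) vs v :
  good_chain f b (vs ++ [v]) <->
  good_chain f b vs /\ exists x y z, equivE f v (f_at f x y z) /\ equivE f x (chain b vs).
Proof.
  unfold good_chain. rewrite length_app; simpl. split.
  - intros H. split.
    + intros i Hi. destruct (H i ltac:(lia)) as [x [y [z [H1 H2]]]].
      rewrite app_nth1 in H1 by lia.
      rewrite firstn_app in H2. replace (i - length vs) with 0 in H2 by lia.
      simpl in H2; rewrite app_nil_r in H2. eauto.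
    + destruct (H (length vs) ltac:(lia)) as [x [y [z [H1 H2]]]].
      rewrite app_nth2, Nat.sub_diag in H1 by lia. simpl in H1.
      rewrite firstn_app, firstn_all, Nat.sub_diag in H2. simpl in H2.
      rewrite app_nil_r in H2. eauto.
  - intros [H [x [y [z [H1 H2]]]]] i Hi.
    destruct (Nat.lt_ge_cases i (length vs)).
    + destruct (H i ltac:(lia)) as [x' [y' [z' [H1' H2']]]].
      exists x', y', z'. rewrite app_nth1 by lia.
      rewrite firstn_app. replace (i - length vs) with 0 by lia.
      simpl; rewrite app_nil_r. auto.
    + assert (i = length vs) by lia; subst i.
      exists x, y, z. rewrite app_nth2, Nat.sub_diag by lia. simpl.
      rewrite firstn_app, firstn_all, Nat.sub_diag. simpl.
      rewrite app_nil_r. auto.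
Qed.

Lemma chain_app {X} (b : word X) vs v : chain b (vs ++ [v]) = Op (chain b vs) v.
Proof. unfold chain. rewrite fold_left_app. reflexivity. Qed.

Lemma CF_chain f X (B : word X -> Prop) t :
  CF f B t <-> exists b vs, B b /\ good_chain f b vs /\ t = chain b vs.
Proof.
  split.
  - induction 1 as [b Hb | t v x y z Ht IH Hv Hx].
    + exists b, []. split; [auto|split; [|reflexivity]].
      intros i Hi; simpl in Hi; lia.
    + destruct IH as [b [vs [Hb [Hg ->]]]].
      exists b, (vs ++ [v]). split; [auto|split].
      * apply good_app. split; eauto.
      * symmetry; apply chain_app.
  - intros [b [vs [Hb [Hg ->]]]]. revert Hg.
    induction vs as [|v vs IH] using rev_ind; intros Hg.
    + apply cf_base; auto.
    + apply good_app in Hg as [Hg [x [y [z [H1 H2]]]]].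
      rewrite chain_app. eapply cf_ext; eauto.
Qed.

Theorem mainTheorem11 (X : Type) (f : word var3) :
  implies_xy f ->
  forall w : word X, irreducible f w ->
  (forall w1 w2 : word X, w = Op w1 w2 ->
     forall w' : word X,
       equivE f w w' <->
       exists (w1' w2' : word X) (vs : list (word X)),
         equivE f w1' w1 /\ equivE f w2' w2 /\
         good_chain f (Op w1' w2') vs /\ w' = chain (Op w1' w2') vs) /\
  (forall a : X, w = Var a ->
     forall w' : word X,
       equivE f w w' <->
       exists vs : list (word X),
         good_chain f (Var a) vs /\ w' = chain (Var a) vs).
Proof.
  intros _ w Hirr. split.
  - intros w1 w2 -> w'.
    set (B := fun t : word X => exists w1' w2', t = Op w1' w2' /\ equivE f w1' w1 /\ equivE f w2' w2).
    assert (HB : forall b t', B b -> step f b t' -> B t' \/ exists y z, t' = Op b (f_at f b y z)).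
    { intros b t' [w1' [w2' [-> [H1 H2]]]] Hs. inversion Hs; subst.
      - right; eauto.
      - exfalso. apply Hirr. exists w1, w2. split; [reflexivity|].
        exists t'. eapply eqv_trans; [apply eqv_sym; exact H1|].
        eapply eqv_trans; [apply (eqv_E f t' y z)|].
        apply eqv_op; [apply eqv_refl| exact H2].
      - left. exists u', w2'. split; [reflexivity|split; auto].
        eapply eqv_trans; [apply eqv_sym, step_sound; eauto| exact H1].
      - left. exists w1', v'. split; [reflexivity|split; auto].
        eapply eqv_trans; [apply eqv_sym, step_sound; eauto| exact H2]. }
    split.
    + intros H. apply complete in H.
      assert (Hc : CF f B w').
      { apply (CF_D f X B HB _ _ H). apply cf_base. exists w1, w2.
        split; [reflexivity| split; apply eqv_refl]. }
      apply CF_chain in Hc as [b [vs [[w1' [w2' [-> [H1 H2]]]] [Hg ->]]]].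
      exists w1', w2', vs. auto.
    + intros [w1' [w2' [vs [H1 [H2 [Hg ->]]]]]].
      apply (CF_equiv f X B).
      * intros b [u1 [u2 [-> [K1 K2]]]]. apply eqv_op; apply eqv_sym; auto.
      * apply CF_chain. exists (Op w1' w2'), vs. split; [|auto].
        exists w1', w2'. auto.
  - intros a -> w'.
    set (B := fun t : word X => t = Var a).
    assert (HB : forall b t', B b -> step f b t' -> B t' \/ exists y z, t' = Op b (f_at f b y z)).
    { intros b t' Hb Hs. unfold B in Hb; subst b. inversion Hs; subst. right; eauto. }
    split.
    + intros H. apply complete in H.
      assert (Hc : CF f B w').
      { apply (CF_D f X B HB _ _ H). apply cf_base. reflexivity. }
      apply CF_chain in Hc as [b [vs [Hb [Hg ->]]]]. unfold B in Hb; subst b.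
      eauto.
    + intros [vs [Hg ->]].
      apply (CF_equiv f X B).
      * intros b Hb; unfold B in Hb; subst b. apply eqv_refl.
      * apply CF_chain. exists (Var a), vs. unfold B; auto.
Qed.
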